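(* Let $(X,\mathfrak{m})$ be a measurable space with $\mathfrak{m}$ an infinite $\sigma$-algebra containing every finite subset of $X$, and let $X^*=\mathfrak{m}^\beta\setminus e(X)$. Then every countable union of nowhere dense subsets of $X^*$ is nowhere dense in $X^*$.
   Context: An $\mathfrak{m}$-filter is a family $p\subseteq\mathfrak{m}$ with $\emptyset\notin p$, $X\in p$, closed under supersets belonging to $\mathfrak{m}$ and under finite intersections; an $\mathfrak{m}$-ultrafilter is a maximal $\mathfrak{m}$-filter; $\mathfrak{m}^\beta$ is the set of all $\mathfrak{m}$-ultrafilters, topologized by the base $\{\widehat{A}:A\in\mathfrak{m}\}$ where $\widehat{A}=\{p\in\mathfrak{m}^\beta:A\in p\}$. The map $e:X\to\mathfrak{m}^\beta$ is $e(x)=\{A\in\mathfrak{m}:x\in A\}$. $X^*$ carries the subspace topology. *)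

(* Defs.v *)
From Stdlib Require Import List Classical.

Set Implicit Arguments.

Section Defs.
Variable X : Type.
Variable m : (X -> Prop) -> Prop.

Definition is_sigma_algebra : Prop :=
  m (fun _ => True) /\
  (forall A, m A -> m (fun x => ~ A x)) /\
  (forall F : nat -> X -> Prop, (forall n, m (F n)) -> m (fun x => exists n, F n x)).

Definition family_infinite : Prop :=
  ~ exists l : list (X -> Prop), forall A, m A -> In A l.

Definition contains_finite_sets : Prop :=
  forall l : list X, m (fun x => In x l).

Definition is_mfilter (p : (X -> Prop) -> Prop) : Prop :=
  (forall A, p A -> m A) /\
  (forall A, p A -> exists x, A x) /\
  p (fun _ => True) /\
  (forall A B, p A -> m B -> (forall x, A x -> B x) -> p B) /\
  (forall A B, p A -> p B -> p (fun x => A x /\ B x)).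

Definition is_multrafilter (p : (X -> Prop) -> Prop) : Prop :=
  is_mfilter p /\
  forall q, is_mfilter q -> (forall A, p A -> q A) -> forall A, q A -> p A.

Definition mbeta : Type := { p : (X -> Prop) -> Prop | is_multrafilter p }.

Definition hat (A : X -> Prop) : mbeta -> Prop := fun p => proj1_sig p A.

Definition mbeta_open (U : mbeta -> Prop) : Prop :=
  forall p, U p -> exists A, m A /\ hat A p /\ forall q, hat A q -> U q.

(* e(x) = { A in m : x in A }; p = e(x) (extensional equality of families) *)
Definition is_e (x : X) (p : mbeta) : Prop :=
  forall A, proj1_sig p A <-> (m A /\ A x).

Definition Xstar (p : mbeta) : Prop := ~ exists x, is_e x p.

Definition Xstar_open (U : mbeta -> Prop) : Prop :=
  exists V, mbeta_open V /\ forall p, U p <-> (V p /\ Xstar p).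

Definition Xstar_closure (N : mbeta -> Prop) : mbeta -> Prop :=
  fun p => Xstar p /\
    forall U, Xstar_open U -> U p -> exists q, U q /\ N q.

Definition Xstar_nowhere_dense (N : mbeta -> Prop) : Prop :=
  (forall p, N p -> Xstar p) /\
  forall U, Xstar_open U -> (forall p, U p -> Xstar_closure N p) ->
    forall p, ~ U p.

End Defs.

(* Main.v *)
Require Import Defs.
From Stdlib Require Import List Lia Classical ClassicalEpsilon FunctionalExtensionality PropExtensionality.

Definition sub {U : Type} (M N : U -> Prop) := forall u, M u -> N u.
Definition Union {U : Type} (C : (U->Prop)->Prop) : U -> Prop := fun u => exists M, C M /\ M u.
Definition chainC {U : Type} (C : (U->Prop)->Prop) :=
  forall M1 M2, C M1 -> C M2 -> sub M1 M2 \/ sub M2 M1.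

Inductive Tw {U : Type} (g : (U->Prop)->U->Prop) (A0 : U->Prop) : (U->Prop) -> Prop :=
| Tw0 : Tw g A0 A0
| TwS : forall M, Tw g A0 M -> Tw g A0 (g M)
| TwU : forall C, (forall M, C M -> Tw g A0 M) -> (exists M, C M) -> chainC C -> Tw g A0 (Union C).

Lemma set_ext {U : Type} (M N : U -> Prop) : sub M N -> sub N M -> M = N.
Proof.
  intros H1 H2. apply functional_extensionality. intro u.
  apply propositional_extensionality. split; auto.
Qed.

Lemma tw_A0 {U : Type} (g : (U->Prop)->U->Prop) A0 (ginc : forall M, sub M (g M)) :
  forall M, Tw g A0 M -> sub A0 M.
Proof.
  intros M H. induction H as [| M H IH | C HC IH [M0 HM0] Hch].
  - intros u h; exact h.
  - intros u h. apply ginc. auto.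
  - intros u h. exists M0. split; auto. apply (IH M0 HM0 u h).
Qed.

Definition ext {U : Type} (g : (U->Prop)->U->Prop) A0 (M : U -> Prop) :=
  forall N, Tw g A0 N -> sub N M -> ~ sub M N -> sub (g N) M.

Lemma tw_L1 {U : Type} (g : (U->Prop)->U->Prop) A0 (ginc : forall M, sub M (g M)) :
  forall M, Tw g A0 M -> ext g A0 M -> forall N, Tw g A0 N -> sub N M \/ sub (g M) N.
Proof.
  intros M HM Hext N HN.
  induction HN as [| N HN IH | C HC IH Hne Hch].
  - left. apply (tw_A0 g A0 ginc M HM).
  - destruct IH as [IH | IH].
    + destruct (classic (sub M N)) as [H | H].
      * right. rewrite (set_ext M N H IH). intros u h; exact h.
      * left. apply Hext; auto.
    + right. intros u h. apply ginc. auto.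
  - destruct (classic (forall N, C N -> sub N M)) as [H | H].
    + left. intros u [N [HN h]]. exact (H N HN u h).
    + right. apply not_all_ex_not in H. destruct H as [N H].
      apply imply_to_and in H. destruct H as [HN H].
      destruct (IH N HN) as [H' | H']; [contradiction|].
      intros u h. exists N. split; auto.
Qed.

Lemma tw_L2 {U : Type} (g : (U->Prop)->U->Prop) A0 (ginc : forall M, sub M (g M)) :
  forall M, Tw g A0 M -> ext g A0 M.
Proof.
  intros M HM. induction HM as [| M HM IH | C HC IH Hne Hch].
  - intros N HN H1 H2. exfalso. apply H2. apply (tw_A0 g A0 ginc N HN).
  - intros N HN H1 H2.
    destruct (tw_L1 g A0 ginc M HM IH N HN) as [H | H]; [|contradiction].
    destruct (classic (sub M N)) as [H' | H'].
    + rewrite (set_ext M N H' H). intros u h; exact h.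
    + intros u h. apply ginc. apply (IH N HN H H' u h).
  - intros N HN H1 H2.
    assert (HTU : Tw g A0 (Union C)) by (apply TwU; auto).
    destruct (classic (forall M, C M -> sub (g M) N)) as [H | H].
    + exfalso. apply H2. intros u [M [HM h]]. apply (H M HM). apply ginc. exact h.
    + apply not_all_ex_not in H. destruct H as [M H].
      apply imply_to_and in H. destruct H as [HM H].
      destruct (tw_L1 g A0 ginc M (HC M HM) (IH M HM) N HN) as [H3 | H3]; [|contradiction].
      destruct (classic (sub M N)) as [H4 | H4].
      * assert (E : M = N) by (apply set_ext; auto). subst N.
        destruct (tw_L1 g A0 ginc M (HC M HM) (IH M HM) (Union C) HTU) as [H5 | H5].
        -- exfalso. apply H2. exact H5.
        -- exact H5.
      * intros u h. exists M. split; auto. apply (IH M HM N HN H3 H4 u h).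
Qed.

Lemma zorn_sets {U : Type} (P : (U->Prop)->Prop)
  (Pchain : forall C : (U->Prop)->Prop, (forall M, C M -> P M) -> (exists M, C M) ->
     chainC C -> P (Union C))
  (A0 : U -> Prop) (PA0 : P A0) :
  exists M, P M /\ sub A0 M /\ forall M', P M' -> sub M M' -> sub M' M.
Proof.
  pose (Q := fun M M' => sub M M' /\ (P M -> P M') /\
     ((exists M'', P M'' /\ sub M M'' /\ ~ sub M'' M) -> ~ sub M' M)).
  assert (gex : forall M, exists M', Q M M').
  { intro M. destruct (classic (exists M'', P M'' /\ sub M M'' /\ ~ sub M'' M)) as [H | H].
    - destruct H as [M'' [H1 [H2 H3]]]. exists M''. split; auto.
    - exists M. split; [intros u h; exact h|]. split; auto. }
  pose (g := fun M => epsilon (inhabits A0) (Q M)).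
  assert (gspec : forall M, Q M (g M)) by (intro M; apply epsilon_spec; apply gex).
  assert (ginc : forall M, sub M (g M)) by (intro M; apply (gspec M)).
  assert (HP : forall M, Tw g A0 M -> P M).
  { intros M H. induction H as [| M H IH | C HC IH Hne Hch]; auto.
    apply (gspec M); auto. }
  assert (Hch : chainC (Tw g A0)).
  { intros M1 M2 H1 H2. destruct (tw_L1 g A0 ginc M1 H1 (tw_L2 g A0 ginc M1 H1) M2 H2) as [H|H].
    - right; exact H.
    - left. intros u h. apply H. apply ginc. exact h. }
  assert (HU : Tw g A0 (Union (Tw g A0))).
  { apply TwU; auto. exists A0. constructor. }
  exists (Union (Tw g A0)). split; [auto|]. split.
  - apply (tw_A0 g A0 ginc _ HU).
  - intros M' HM' Hs. apply NNPP. intro Hn.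
    destruct (gspec (Union (Tw g A0))) as [_ [_ H3]].
    apply H3.
    + exists M'. auto.
    + intros u h. exists (g (Union (Tw g A0))). split; auto. apply TwS; auto.
Qed.

Lemma m_inter (X : Type) (m : (X -> Prop) -> Prop) (Hsig : is_sigma_algebra m)
  (A C : X -> Prop) : m A -> m C -> m (fun x => A x /\ C x).
Proof.
  intros HA HC. destruct Hsig as [HT [Hc Hu]].
  pose (F := fun n : nat => match n with 0 => A | _ => C end).
  assert (H1 : m (fun x => ~ exists n, ~ F n x)).
  { apply Hc. apply (Hu (fun n x => ~ F n x)). intro n. apply Hc. destruct n; simpl; auto. }
  replace (fun x => A x /\ C x) with (fun x => ~ exists n, ~ F n x); auto.
  apply set_ext; intros x h.
  - split.
    + apply NNPP. intro h'. apply h. exists 0. exact h'.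
    + apply NNPP. intro h'. apply h. exists 1. exact h'.
  - intros [n hn]. destruct h as [h1 h2]. destruct n; simpl in hn; auto.
Qed.

Lemma m_ncl (X : Type) (m : (X -> Prop) -> Prop) (Hsig : is_sigma_algebra m)
  (Hfin : contains_finite_sets m) (l : list X) : m (fun x => ~ In x l).
Proof. destruct Hsig as [_ [Hc _]]. apply (Hc (fun x => In x l)). apply Hfin. Qed.

Lemma uf_compl (X : Type) (m : (X -> Prop) -> Prop) (Hsig : is_sigma_algebra m)
  (p : (X -> Prop) -> Prop) (Hp : is_multrafilter m p) (A : X -> Prop) :
  m A -> ~ p A -> p (fun x => ~ A x).
Proof.
  intros HA HnA.
  destruct Hp as [[Hm [Hne [HT [Hup Hint]]]] Hmax].
  destruct (classic (exists D, p D /\ forall x, D x -> A x)) as [[D [HD HDA]] | H].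
  { exfalso. apply HnA. apply (Hup D); auto. }
  assert (H' : forall D, p D -> exists x, D x /\ ~ A x).
  { intros D HD. apply NNPP. intro h. apply H. exists D. split; auto.
    intros x hx. apply NNPP. intro h2. apply h. exists x. auto. }
  pose (q := fun C => m C /\ exists D, p D /\ forall x, D x -> ~ A x -> C x).
  assert (Hq : is_mfilter m q).
  { split; [|split; [|split; [|split]]].
    - intros C [h _]; exact h.
    - intros C [_ [D [HD HDC]]]. destruct (H' D HD) as [x [h1 h2]]. exists x. auto.
    - split. apply Hsig. exists (fun _ => True). split; auto.
    - intros C C' [_ [D [HD HDC]]] HC' Hs. split; auto. exists D. split; auto.
    - intros C C' [HC [D [HD HDC]]] [HC' [D' [HD' HDC']]]. split.
      + apply m_inter; auto.
      + exists (fun x => D x /\ D' x). split; auto. intros x [h1 h2] h3. auto. }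
  apply (Hmax q Hq).
  - intros C HC. split; auto. exists C. auto.
  - split. apply (proj1 (proj2 Hsig)); auto. exists (fun _ => True). split; auto.
Qed.

Lemma mb_filter (X : Type) (m : (X -> Prop) -> Prop) (p : mbeta m) : is_mfilter m (proj1_sig p).
Proof. exact (proj1 (proj2_sig p)). Qed.

Lemma nonprin_single (X : Type) (m : (X -> Prop) -> Prop) (Hsig : is_sigma_algebra m)
  (p : mbeta m) : Xstar p -> forall a, ~ proj1_sig p (fun y => In y (a :: nil)).
Proof.
  intros Hx a Ha. apply Hx. exists a. intro A.
  destruct (mb_filter X m p) as [Hm [Hne [HT [Hup Hint]]]].
  split.
  - intro HA. split; auto. destruct (Hne _ (Hint _ _ HA Ha)) as [y [h1 [h2|[]]]].
    subst; auto.
  - intros [HA Ha']. apply (Hup _ A Ha HA). intros y [h|[]]. subst; auto.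
Qed.

Lemma nonprin_list (X : Type) (m : (X -> Prop) -> Prop) (Hsig : is_sigma_algebra m)
  (Hfin : contains_finite_sets m)
  (p : mbeta m) : Xstar p -> forall l, proj1_sig p (fun y => ~ In y l).
Proof.
  intros Hx l.
  destruct (mb_filter X m p) as [Hm [Hne [HT [Hup Hint]]]].
  induction l as [|a l IH].
  - apply (Hup (fun _ => True)); auto. apply m_ncl; auto.
  - assert (H1 : proj1_sig p (fun y => ~ In y (a :: nil))).
    { apply (uf_compl X m Hsig _ (proj2_sig p)). apply Hfin.
      apply nonprin_single; auto. }
    apply (Hup _ _ (Hint _ _ H1 IH)). apply m_ncl; auto.
    intros x [h1 h2] [h|h]; [apply h1; left; auto | auto].
Qed.

Lemma step_lemma (X : Type) (m : (X -> Prop) -> Prop) (Hsig : is_sigma_algebra m)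
  (Nn : mbeta m -> Prop) (HN : Xstar_nowhere_dense Nn)
  (A : X -> Prop) (p : mbeta m) : m A -> hat A p -> Xstar p ->
  exists A' (p' : mbeta m), m A' /\ sub A' A /\ hat A' p' /\ Xstar p' /\
     forall q : mbeta m, hat A' q -> Xstar q -> ~ Nn q.
Proof.
  intros HA Hp Hx. destruct HN as [_ Hnd].
  assert (Hop : Xstar_open (fun r : mbeta m => hat A r /\ Xstar r)).
  { exists (hat A). split.
    - intros r hr. exists A. auto.
    - intro r; tauto. }
  assert (H : ~ forall r : mbeta m, hat A r /\ Xstar r -> Xstar_closure Nn r).
  { intro H. exact (Hnd _ Hop H p (conj Hp Hx)). }
  apply not_all_ex_not in H. destruct H as [p' H].
  apply imply_to_and in H. destruct H as [[Hp' Hx'] Hc].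
  assert (H2 : ~ forall U, Xstar_open U -> U p' -> exists q, U q /\ Nn q).
  { intro h. apply Hc. split; auto. }
  apply not_all_ex_not in H2. destruct H2 as [W H2].
  apply imply_to_and in H2. destruct H2 as [HW H2].
  apply imply_to_and in H2. destruct H2 as [HWp H2].
  destruct HW as [V [HV HWV]].
  destruct (proj1 (HWV p') HWp) as [HVp _].
  destruct (HV p' HVp) as [C [HC [HCp HCV]]].
  destruct (mb_filter X m p') as [Hm [Hne [HT [Hup Hint]]]].
  exists (fun x => A x /\ C x), p'. split; [apply m_inter; auto|].
  split; [intros x [h _]; exact h|]. split; [apply Hint; auto|]. split; auto.
  intros q Hq Hxq HNq. apply H2. exists q. split; auto.
  apply HWV. split; auto. apply HCV.
  destruct (mb_filter X m q) as [_ [_ [_ [Hup' _]]]].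
  apply (Hup' _ C Hq HC). intros x [_ h]; exact h.
Qed.

Definition infinite_set {X : Type} (A : X -> Prop) := forall l : list X, exists x, A x /\ ~ In x l.

Lemma build_seq (X : Type) (m : (X -> Prop) -> Prop) (Hsig : is_sigma_algebra m)
  (Hfin : contains_finite_sets m)
  (N : nat -> mbeta m -> Prop) (HN : forall n, Xstar_nowhere_dense (N n))
  (A0 : X -> Prop) (p0 : mbeta m) : m A0 -> hat A0 p0 -> Xstar p0 ->
  exists As : nat -> X -> Prop, As 0 = A0 /\ (forall n, m (As n)) /\
    (forall n, sub (As (S n)) (As n)) /\ (forall n, infinite_set (As n)) /\
    (forall n q, hat (As (S n)) q -> Xstar q -> ~ N n q).
Proof.
  intros HA0 Hp0 Hx0.
  pose (Inv := fun s : (X -> Prop) * mbeta m => m (fst s) /\ hat (fst s) (snd s) /\ Xstar (snd s)).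
  pose (R := fun n (s s' : (X -> Prop) * mbeta m) => Inv s' /\ sub (fst s') (fst s) /\
      forall q, hat (fst s') q -> Xstar q -> ~ N n q).
  assert (Rex : forall n s, exists s', Inv s -> R n s s').
  { intros n s. destruct (classic (Inv s)) as [H | H].
    - destruct H as [h1 [h2 h3]].
      destruct (step_lemma X m Hsig (N n) (HN n) (fst s) (snd s) h1 h2 h3)
        as [A' [p' [k1 [k2 [k3 [k4 k5]]]]]].
      exists (A', p'). intros _. split; [split; auto|]. split; auto.
    - exists s. intro; contradiction. }
  pose (F := fun n s => epsilon (inhabits (A0, p0)) (fun s' => Inv s -> R n s s')).
  assert (Fspec : forall n s, Inv s -> R n s (F n s)).
  { intros n s. apply (epsilon_spec (inhabits (A0, p0)) (fun s' => Inv s -> R n s s')). apply Rex. }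
  pose (seq := fix seq n := match n with 0 => (A0, p0) | S k => F k (seq k) end).
  assert (Hinv : forall n, Inv (seq n)).
  { induction n as [|n IH].
    - split; auto.
    - exact (proj1 (Fspec n (seq n) IH)). }
  exists (fun n => fst (seq n)). split; [reflexivity|]. split; [intro n; apply (Hinv n)|].
  split; [intro n; apply (Fspec n (seq n) (Hinv n))|]. split.
  - intros n l. destruct (Hinv n) as [h1 [h2 h3]].
    destruct (mb_filter X m (snd (seq n))) as [Hm [Hne [HT [Hup Hint]]]].
    destruct (Hne _ (Hint _ _ h2 (nonprin_list X m Hsig Hfin _ h3 l))) as [x hx].
    exists x. exact hx.
  - intros n q. apply (Fspec n (seq n) (Hinv n)).
Qed.

Lemma points_lemma (X : Type) (m : (X -> Prop) -> Prop) (Hsig : is_sigma_algebra m)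
  (Hfin : contains_finite_sets m) (As : nat -> X -> Prop)
  (Hdec : forall n, sub (As (S n)) (As n)) (Hinfs : forall n, infinite_set (As n)) :
  exists B : X -> Prop, m B /\ infinite_set B /\
    forall n, exists l, forall y, B y -> ~ In y l -> As n y.
Proof.
  destruct (Hinfs 0 nil) as [x0 _].
  pose (ch := fun n l => epsilon (inhabits x0) (fun x => As n x /\ ~ In x l)).
  assert (chs : forall n l, As n (ch n l) /\ ~ In (ch n l) l).
  { intros n l. apply (epsilon_spec (inhabits x0) (fun x => As n x /\ ~ In x l)). apply Hinfs. }
  pose (L := fix L n := match n with 0 => nil | S k => ch k (L k) :: L k end).
  pose (xs := fun n => ch n (L n)).
  assert (HL : forall n y, In y (L n) <-> exists j, j < n /\ y = xs j).
  { induction n as [|n IH]; intro y; simpl.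
    - split; [intros []| intros [j [h _]]; inversion h].
    - split.
      + intros [h|h].
        * exists n. split; auto.
        * destruct (proj1 (IH y) h) as [j [h1 h2]]. exists j. split; auto.
      + intros [j [h1 h2]]. destruct (PeanoNat.Nat.eq_dec j n) as [e|e].
        * left. subst. reflexivity.
        * right. apply IH. exists j. split; auto. lia. }
  assert (HND : forall n, NoDup (L n)).
  { induction n as [|n IH]; simpl. constructor. constructor; auto. apply chs. }
  assert (Hlen : forall n, length (L n) = n).
  { induction n as [|n IH]; simpl; auto. }
  assert (Hmono : forall n k, sub (As (k + n)) (As n)).
  { intros n k. induction k as [|k IH]; simpl. intros u h; exact h.
    intros u h. apply IH. apply Hdec. exact h. }
  exists (fun y => exists n, y = xs n). split; [|split].
  - replace (fun y => exists n, y = xs n) with (fun y => exists n, (fun n y => In y (xs n :: nil)) n y).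
    + apply Hsig. intro n. apply Hfin.
    + apply set_ext; intros y [n h]; exists n; simpl in *.
      * destruct h as [h|[]]; auto.
      * left; auto.
  - intro l. assert (H : ~ incl (L (S (length l))) l).
    { intro H. pose proof (NoDup_incl_length (HND (S (length l))) H) as h.
      rewrite Hlen in h. lia. }
    apply NNPP. intro H'. apply H. intros y hy.
    apply NNPP. intro hn. apply H'. exists y. split; auto.
    destruct (proj1 (HL _ y) hy) as [j [_ e]]. exists j; auto.
  - intro n. exists (L n). intros y [j e] hy. subst y.
    destruct (PeanoNat.Nat.lt_ge_cases j n) as [h|h].
    + exfalso. apply hy. apply HL. exists j. auto.
    + apply (Hmono n (j - n)). replace (j - n + n) with j by lia. apply chs.
Qed.

Lemma exists_nonprin (X : Type) (m : (X -> Prop) -> Prop) (Hsig : is_sigma_algebra m)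
  (Hfin : contains_finite_sets m) (B : X -> Prop) (HB : m B) (Hinf : infinite_set B) :
  exists q : mbeta m, hat B q /\ Xstar q.
Proof.
  pose (F0 := fun C => m C /\ exists l, forall y, B y -> ~ In y l -> C y).
  assert (HF0 : is_mfilter m F0).
  { split; [|split; [|split; [|split]]].
    - intros C [h _]; exact h.
    - intros C [_ [l Hl]]. destruct (Hinf l) as [x [h1 h2]]. exists x. auto.
    - split. apply Hsig. exists nil. auto.
    - intros C C' [_ [l Hl]] HC' Hs. split; auto. exists l. auto.
    - intros C C' [HC [l Hl]] [HC' [l' Hl']]. split; [apply m_inter; auto|].
      exists (l ++ l'). intros y hy hn. split.
      + apply Hl; auto. intro h; apply hn; apply in_or_app; auto.
      + apply Hl'; auto. intro h; apply hn; apply in_or_app; auto. }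
  pose (P := fun M => is_mfilter m M /\ sub F0 M).
  destruct (zorn_sets P) with (A0 := F0) as [M [[HM HFM] [_ Hmax]]].
  - intros C HC [M0 HM0] Hch. split; [split; [|split; [|split; [|split]]]|].
    + intros A [M1 [h1 h2]]. exact (proj1 (proj1 (HC M1 h1)) A h2).
    + intros A [M1 [h1 h2]]. exact (proj1 (proj2 (proj1 (HC M1 h1))) A h2).
    + exists M0. split; auto. exact (proj1 (proj2 (proj2 (proj1 (HC M0 HM0))))).
    + intros A A' [M1 [h1 h2]] hm hs. exists M1. split; auto.
      apply (proj1 (proj2 (proj2 (proj2 (proj1 (HC M1 h1)))))) with A; auto.
    + intros A A' [M1 [h1 h2]] [M2 [h1' h2']].
      destruct (Hch M1 M2 h1 h1') as [s|s].
      * exists M2. split; auto. exact (proj2 (proj2 (proj2 (proj2 (proj1 (HC M2 h1'))))) A A' (s A h2) h2').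
      * exists M1. split; auto. exact (proj2 (proj2 (proj2 (proj2 (proj1 (HC M1 h1))))) A A' h2 (s A' h2')).
    + intros A h. exists M0. split; auto. apply (proj2 (HC M0 HM0)). exact h.
  - split; auto. intros A h; exact h.
  - assert (Hu : is_multrafilter m M).
    { split; auto. intros q Hq Hs. apply Hmax.
      - split; auto. intros A h. apply Hs. apply HFM. exact h.
      - exact Hs. }
    exists (exist _ M Hu). split.
    + unfold hat; simpl. apply HFM. split; auto. exists nil. auto.
    + intros [x Hx]. unfold is_e in Hx; simpl in Hx.
      assert (H : M (fun y => ~ In y (x :: nil))).
      { apply HFM. split. apply m_ncl; auto. exists (x :: nil). auto. }
      apply (proj2 (proj1 (Hx _) H)). left; auto.
Qed.

Theorem theorem3p3 (X : Type) (m : (X -> Prop) -> Prop)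
  (Hsig : is_sigma_algebra m)
  (Hinf : family_infinite m)
  (Hfin : contains_finite_sets m)
  (N : nat -> mbeta m -> Prop)
  (HN : forall n, Xstar_nowhere_dense (N n)) :
  Xstar_nowhere_dense (fun p => exists n, N n p).
Proof.
  split.
  - intros p [n h]. exact (proj1 (HN n) p h).
  - intros U [V [HV HUV]] Hcl p Hp.
    destruct (proj1 (HUV p) Hp) as [HVp Hxp].
    destruct (HV p HVp) as [A [HA [HAp HAV]]].
    destruct (build_seq X m Hsig Hfin N HN A p HA HAp Hxp)
      as [As [E0 [Hm [Hdec [Hinfs Hav]]]]].
    destruct (points_lemma X m Hsig Hfin As Hdec Hinfs) as [B [HB [HBi HBs]]].
    destruct (exists_nonprin X m Hsig Hfin B HB HBi) as [q [HBq Hxq]].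
    assert (Key : forall (r : mbeta m) n, hat B r -> Xstar r -> hat (As n) r).
    { intros r n hr hx. destruct (HBs n) as [l Hl].
      destruct (mb_filter X m r) as [_ [_ [_ [Hup Hint]]]].
      apply (Hup _ _ (Hint _ _ hr (nonprin_list X m Hsig Hfin r hx l))); auto.
      intros y [h1 h2]. auto. }
    assert (HUq : U q).
    { apply HUV. split; auto. apply HAV. rewrite <- E0. apply Key; auto. }
    destruct (Hcl q HUq) as [_ Hc].
    assert (HW : Xstar_open (fun r : mbeta m => hat B r /\ Xstar r)).
    { exists (hat B). split.
      - intros r hr. exists B. auto.
      - intro r; tauto. }
    destruct (Hc _ HW (conj HBq Hxq)) as [r [[hr hx] [n hn]]].
    apply (Hav n r); auto.
Qed.
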